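(* Let $A\subseteq\omega$ be a c.e. set such that $\overline{\rho}(A)$ is a $\Delta^0_2$ real. Then $A$ has a computable subset $B$ such that $\overline{\rho}(B)=\overline{\rho}(A)$, and hence $d(A,B)=0$.
   Context: For $S\subseteq\omega$ and $n>0$, $\rho_n(S)=|S\cap[0,n)|/n$; $\overline{\rho}(S)=\limsup_n\rho_n(S)$ and $\underline{\rho}(S)=\liminf_n\rho_n(S)$. For $A,B\subseteq\omega$, $d(A,B)=\underline{\rho}(A\triangle B)$. A real is $\Delta^0_2$ if it is the limit of a computable sequence of rationals. *)

(* Defs.v *)
From Stdlib Require Import Reals List Lia.
From Coquelicot Require Import Coquelicot.
Import ListNotations.
Open Scope R_scope.

Inductive PR : nat -> Type :=
| PRzero : forall k, PR k
| PRsucc : PR 1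
| PRproj : forall k, nat -> PR k
| PRcomp : forall k m, PR m -> PRs k m -> PR k
| PRrec  : forall k, PR k -> PR (S (S k)) -> PR (S k)
| PRmu   : forall k, PR (S k) -> PR k
with PRs : nat -> nat -> Type :=
| PRnil  : forall k, PRs k 0
| PRcons : forall k m, PR k -> PRs k m -> PRs k (S m).

Inductive eval : forall k, PR k -> list nat -> nat -> Prop :=
| ev_zero : forall k v, eval k (PRzero k) v 0
| ev_succ : forall v, eval 1 PRsucc v (S (hd 0%nat v))
| ev_proj : forall k i v, eval k (PRproj k i) v (nth i v 0%nat)
| ev_comp : forall k m (f : PR m) (gs : PRs k m) v ws y,
    evals k m gs v ws -> eval m f ws y -> eval k (PRcomp k m f gs) v y
| ev_rec0 : forall k g h v y,
    eval k g v y -> eval (S k) (PRrec k g h) (0%nat :: v) y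
| ev_recS : forall k g h n v z y,
    eval (S k) (PRrec k g h) (n :: v) z ->
    eval (S (S k)) h (n :: z :: v) y ->
    eval (S k) (PRrec k g h) (S n :: v) y
| ev_mu : forall k f v n,
    eval (S k) f (n :: v) 0%nat ->
    (forall m, (m < n)%nat -> exists z, eval (S k) f (m :: v) (S z)) ->
    eval k (PRmu k f) v n
with evals : forall k m, PRs k m -> list nat -> list nat -> Prop :=
| evs_nil : forall k v, evals k 0 (PRnil k) v []
| evs_cons : forall k m g gs v y ys,
    eval k g v y -> evals k m gs v ys -> evals k (S m) (PRcons k m g gs) v (y :: ys).

Definition computable_fun (f : nat -> nat) : Prop :=
  exists e : PR 1, forall n, eval 1 e [n] (f n).

Definition computable_set (B : nat -> bool) : Prop :=
  exists e : PR 1, forall n, eval 1 e [n] (if B n then 1%nat else 0%nat).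

Definition ce_set (A : nat -> bool) : Prop :=
  exists e : PR 1, forall n, A n = true <-> exists y, eval 1 e [n] y.

Definition subset (B A : nat -> bool) : Prop := forall n, B n = true -> A n = true.

Definition symdiff (A B : nat -> bool) : nat -> bool := fun n => xorb (A n) (B n).

Fixpoint count_below (S : nat -> bool) (n : nat) : nat :=
  match n with
  | O => O
  | Datatypes.S m => (count_below S m + (if S m then 1 else 0))%nat
  end.

Definition rho (S : nat -> bool) (n : nat) : R := INR (count_below S n) / INR n.

(* limsup / liminf over n > 0 (reindexed by n+1) *)
Definition upper_density (S : nat -> bool) : Rbar := LimSup_seq (fun n => rho S (Datatypes.S n)).
Definition lower_density (S : nat -> bool) : Rbar := LimInf_seq (fun n => rho S (Datatypes.S n)).

Definition dens_dist (A B : nat -> bool) : Rbar := lower_density (symdiff A B).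

Definition computable_rat_seq (q : nat -> R) : Prop :=
  exists a b c : nat -> nat,
    computable_fun a /\ computable_fun b /\ computable_fun c /\
    forall n, q n = (INR (a n) - INR (b n)) / INR (Datatypes.S (c n)).

Definition Delta02 (r : R) : Prop :=
  exists q : nat -> R, computable_rat_seq q /\ is_lim_seq q r.

(* Main.v *)
Require Import Defs.
From Stdlib Require Import Reals.
From Coquelicot Require Import Coquelicot.
From Stdlib Require Import List Lia Arith ClassicalEpsilon Classical Lra.
Import ListNotations.
Local Open Scope nat_scope.

Definition Tot k (f : list nat -> nat) :=
  exists e : PR k, forall v, length v = k -> eval k e v (f v).
Definition Tots k m (F : list nat -> list nat) :=
  exists es : PRs k m, forall v, length v = k -> evals k m es v (F v).

Lemma evals_length k m es v ws : evals k m es v ws -> length ws = m.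
Proof. induction 1; simpl; auto. Qed.

Lemma Tot_ext k f g : (forall v, length v = k -> f v = g v) -> Tot k f -> Tot k g.
Proof. intros H [e He]; exists e; intros v Hv; rewrite <- H by auto; auto. Qed.

Lemma Tots_ext k m f g : (forall v, length v = k -> f v = g v) -> Tots k m f -> Tots k m g.
Proof. intros H [e He]; exists e; intros v Hv; rewrite <- H by auto; auto. Qed.

Lemma Tot_zero k : Tot k (fun _ => 0).
Proof. exists (PRzero k); intros; constructor. Qed.

Lemma Tot_proj k i : Tot k (fun v => nth i v 0).
Proof. exists (PRproj k i); intros; constructor. Qed.

Lemma Tot_succ : Tot 1 (fun v => S (hd 0 v)).
Proof. exists PRsucc; intros; constructor. Qed.

Lemma Tots_nil k : Tots k 0 (fun _ => []).
Proof. exists (PRnil k); intros; constructor. Qed.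

Lemma Tots_cons k m f F : Tot k f -> Tots k m F -> Tots k (S m) (fun v => f v :: F v).
Proof. intros [e He] [es Hes]; exists (PRcons k m e es); intros; constructor; auto. Qed.

Lemma Tot_comp k m f G : Tot m f -> Tots k m G -> Tot k (fun v => f (G v)).
Proof.
  intros [e He] [es Hes]; exists (PRcomp k m e es); intros v Hv.
  econstructor; eauto. apply He. eapply evals_length; eauto.
Qed.

Lemma Tot_rec k g h : Tot k g -> Tot (S (S k)) h ->
  Tot (S k) (fun v => match v with [] => 0 | n :: w =>
     nat_rec (fun _ => nat) (g w) (fun j z => h (j :: z :: w)) n end).
Proof.
  intros [eg Hg] [eh Hh]; exists (PRrec k eg eh); intros v Hv.
  destruct v as [|n w]; [discriminate|]. simpl in Hv; injection Hv; intro Hw.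
  induction n; simpl.
  - constructor; auto.
  - econstructor; eauto. apply Hh. simpl; lia.
Qed.

Lemma ex_least (P : nat -> Prop) : (exists n, P n) -> exists n, P n /\ forall m, m < n -> ~ P m.
Proof.
  intros [n Hn]. revert Hn. induction n as [n IH] using lt_wf_ind; intros Hn.
  destruct (classic (exists m, m < n /\ P m)) as [[m [Hm1 Hm2]]|Hno].
  - eapply IH; eauto.
  - exists n; split; auto. intros m Hm HP; apply Hno; eauto.
Qed.

Lemma Tot_mu k f : Tot (S k) f -> (forall v, length v = k -> exists n, f (n :: v) = 0) ->
  exists g, Tot k g /\ forall v, length v = k -> f (g v :: v) = 0.
Proof.
  intros [e He] Hex.
  set (P := fun v n => f (n :: v) = 0 /\ forall m, m < n -> f (m :: v) <> 0).
  exists (fun v => epsilon (inhabits 0) (P v)).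
  assert (HP : forall v, length v = k -> P v (epsilon (inhabits 0) (P v))).
  { intros v Hv. apply epsilon_spec. destruct (ex_least _ (Hex v Hv)) as [n [H1 H2]].
    exists n; split; auto. }
  split.
  - exists (PRmu k e). intros v Hv. destruct (HP v Hv) as [H1 H2].
    constructor.
    + assert (HH := He (epsilon (inhabits 0) (P v) :: v) ltac:(simpl; auto)).
      rewrite H1 in HH; exact HH.
    + intros m Hm. specialize (H2 m Hm). destruct (f (m :: v)) as [|z] eqn:E; [congruence|].
      exists z; rewrite <- E; apply He; simpl; auto.
  - intros v Hv; apply (HP v Hv).
Qed.

Lemma Tot_comp1 k f g : Tot 1 f -> Tot k g -> Tot k (fun v => f [g v]).
Proof. intros Hf Hg. apply (Tot_comp k 1 f (fun v => [g v])); auto.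
  apply Tots_cons; auto. apply Tots_nil. Qed.

Lemma Tot_comp2 k f g1 g2 : Tot 2 f -> Tot k g1 -> Tot k g2 -> Tot k (fun v => f [g1 v; g2 v]).
Proof. intros Hf H1 H2. apply (Tot_comp k 2 f (fun v => [g1 v; g2 v])); auto.
  repeat apply Tots_cons; auto. apply Tots_nil. Qed.

Lemma Tot_S k g : Tot k g -> Tot k (fun v => S (g v)).
Proof. intros H. exact (Tot_comp1 k _ g Tot_succ H). Qed.

Lemma Tot_const k c : Tot k (fun _ => c).
Proof. induction c. apply Tot_zero. apply (Tot_S k (fun _ => c)); auto. Qed.

Lemma Tot_add_base : Tot 2 (fun l => hd 0 l + nth 1 l 0).
Proof.
  eapply Tot_ext; [| apply (Tot_rec 1 (fun w => nth 0 w 0) (fun u => S (nth 1 u 0)))].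
  - intros v Hv. destruct v as [|n [|y [|]]]; try discriminate. simpl.
    induction n; simpl; auto.
  - apply Tot_proj.
  - apply Tot_S, Tot_proj.
Qed.

Lemma Tot_plus k f g : Tot k f -> Tot k g -> Tot k (fun v => f v + g v).
Proof. intros Hf Hg. exact (Tot_comp2 k _ f g Tot_add_base Hf Hg). Qed.

Lemma Tot_mul_base : Tot 2 (fun l => hd 0 l * nth 1 l 0).
Proof.
  eapply Tot_ext; [| apply (Tot_rec 1 (fun w => 0) (fun u => nth 1 u 0 + nth 2 u 0))].
  - intros v Hv. destruct v as [|n [|y [|]]]; try discriminate. simpl.
    clear Hv; induction n; simpl; auto. rewrite IHn; lia.
  - apply Tot_zero.
  - apply Tot_plus; apply Tot_proj.
Qed.

Lemma Tot_mult k f g : Tot k f -> Tot k g -> Tot k (fun v => f v * g v).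
Proof. intros Hf Hg. exact (Tot_comp2 k _ f g Tot_mul_base Hf Hg). Qed.

Lemma Tot_pred_base : Tot 1 (fun l => pred (hd 0 l)).
Proof.
  eapply Tot_ext; [| apply (Tot_rec 0 (fun w => 0) (fun u => nth 0 u 0))].
  - intros v Hv. destruct v as [|n [|]]; try discriminate. simpl.
    destruct n; simpl; auto.
  - apply Tot_zero.
  - apply Tot_proj.
Qed.

Lemma Tot_pred k f : Tot k f -> Tot k (fun v => pred (f v)).
Proof. intros Hf. exact (Tot_comp1 k _ f Tot_pred_base Hf). Qed.

Lemma Tot_sub_base : Tot 2 (fun l => nth 1 l 0 - hd 0 l).
Proof.
  eapply Tot_ext; [| apply (Tot_rec 1 (fun w => nth 0 w 0) (fun u => pred (nth 1 u 0)))].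
  - intros v Hv. destruct v as [|n [|y [|]]]; try discriminate. simpl.
    clear Hv; induction n; simpl. lia. rewrite IHn; lia.
  - apply Tot_proj.
  - apply Tot_pred, Tot_proj.
Qed.

Lemma Tot_minus k f g : Tot k f -> Tot k g -> Tot k (fun v => f v - g v).
Proof. intros Hf Hg. exact (Tot_comp2 k _ g f Tot_sub_base Hg Hf). Qed.

Lemma Tot_if0 k x a b : Tot k x -> Tot k a -> Tot k b ->
  Tot k (fun v => match x v with 0 => a v | S _ => b v end).
Proof.
  intros Hx Ha Hb.
  eapply Tot_ext; [| apply (Tot_plus k (fun v => a v * (1 - x v)) (fun v => b v * (1 - (1 - x v))))].
  - intros v _. cbv beta. destruct (x v); simpl; lia.
  - apply Tot_mult; auto. apply Tot_minus; auto. apply Tot_const.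
  - apply Tot_mult; auto. apply Tot_minus; [apply Tot_const|]. apply Tot_minus; auto. apply Tot_const.
Qed.

Lemma Tots_map_nth k idx : Tots k (length idx) (fun v => map (fun i => nth i v 0) idx).
Proof.
  induction idx; simpl. apply Tots_nil. apply Tots_cons; auto. apply Tot_proj.
Qed.

Lemma map_nth_seq (v : list nat) d : map (fun i => nth i v 0) (seq d (length v - d)) = skipn d v.
Proof.
  revert v. induction d; intros v.
  - simpl. rewrite Nat.sub_0_r. induction v; simpl; auto. f_equal.
    rewrite <- seq_shift, map_map. simpl. auto.
  - destruct v; simpl; auto. rewrite <- seq_shift, map_map. simpl. apply IHd.
Qed.

Lemma Tots_skipn k d : Tots (d + k) k (fun v => skipn d v).
Proof.
  assert (H := Tots_map_nth (d + k) (seq d k)); rewrite length_seq in H.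
  eapply Tots_ext; [| exact H].
  intros v Hv. rewrite <- map_nth_seq. f_equal. f_equal. lia.
Qed.

Fixpoint allpos (l : list nat) : bool :=
  match l with [] => true | x :: l => match x with 0 => false | _ => allpos l end end.

Definition mustep (F : nat -> nat) (j acc : nat) : nat :=
  match acc with
  | 0 => 0
  | S O => match F j with 0 => 0 | S O => S (S j) | S (S _) => 1 end
  | S (S _) => acc
  end.

Definition muacc (F : nat -> nat) (n : nat) : nat :=
  nat_rec (fun _ => nat) 1 (fun j acc => mustep F j acc) n.

Fixpoint cev (t : nat) {k} (e : PR k) (v : list nat) {struct e} : nat :=
  match e with
  | PRzero _ => 1
  | PRsucc => S (S (hd 0 v))
  | PRproj _ i => S (nth i v 0)
  | PRcomp _ m f gs => if allpos (cevs t gs v) then cev t f (map pred (cevs t gs v)) else 0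
  | PRrec _ g h => match v with [] => 0 | n :: w =>
      nat_rec (fun _ => nat) (cev t g w)
        (fun j z => match z with 0 => 0 | S z' => cev t h (j :: z' :: w) end) n end
  | PRmu _ f => pred (muacc (fun j => cev t f (j :: v)) (S t))
  end
with cevs (t : nat) {k m} (gs : PRs k m) (v : list nat) {struct gs} : list nat :=
  match gs with
  | PRnil _ => []
  | PRcons _ _ g gs => cev t g v :: cevs t gs v
  end.

Lemma muacc_spec F n m :
  muacc F n = S (S m) <-> (m < n /\ F m = 1 /\ forall i, i < m -> 2 <= F i).
Proof.
  assert (H1 : forall n, muacc F n = 1 <-> forall i, i < n -> 2 <= F i).
  { induction n0; simpl.
    - split; intros; [lia|auto].
    - unfold mustep at 1. fold (muacc F n0).
      destruct (muacc F n0) as [|[|a]] eqn:E.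
      + split; intros H; [discriminate|]. exfalso.
        assert (forall i, i < n0 -> 2 <= F i) by (intros; apply H; lia).
        apply IHn0 in H0. congruence.
      + destruct (F n0) as [|[|b]] eqn:EF; split; intros H; try discriminate.
        * specialize (H n0 ltac:(lia)); lia.
        * specialize (H n0 ltac:(lia)); lia.
        * intros i Hi. destruct (Nat.eq_dec i n0); [subst; lia|]. apply IHn0; auto; lia.
        * reflexivity.
      + split; intros H; [discriminate|]. exfalso.
        assert (forall i, i < n0 -> 2 <= F i) by (intros; apply H; lia).
        apply IHn0 in H0. congruence. }
  revert m; induction n; intros m; simpl.
  - split; [discriminate|lia].
  - unfold mustep at 1. fold (muacc F n).
    destruct (muacc F n) as [|[|a]] eqn:E.
    + split; [discriminate|]. intros [Hm [HF Hi]].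
      destruct (Nat.eq_dec m n).
      * subst. exfalso.
        assert (Hc : muacc F n = 1) by (apply H1; auto). congruence.
      * exfalso. assert (Hc : 0 = S (S m)) by (apply IHn; repeat split; auto; lia). discriminate.
    + assert (Hall : forall i, i < n -> 2 <= F i) by (apply H1; auto).
      destruct (F n) as [|[|b]] eqn:EF.
      * split; [discriminate|]. intros [Hm [HF Hi]].
        destruct (Nat.eq_dec m n); [subst; congruence|]. specialize (Hall m ltac:(lia)); lia.
      * split; intros H.
        -- injection H; intros; subst. repeat split; auto.
        -- destruct H as [Hm [HF Hi]]. destruct (Nat.eq_dec m n); [subst; auto|].
           specialize (Hall m ltac:(lia)); lia.
      * split; [discriminate|]. intros [Hm [HF Hi]].
        destruct (Nat.eq_dec m n); [subst; congruence|]. specialize (Hall m ltac:(lia)); lia.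
    + assert (HA : S (S a) = S (S a)) by reflexivity. apply IHn in HA.
      destruct HA as [Ha [HFa Hia]]. split.
      * intros Heq. injection Heq; intros; subst. repeat split; auto; lia.
      * intros [Hm [HF Hi]].
        destruct (Nat.lt_total a m) as [Hlt|[Heq|Hlt]].
        -- specialize (Hi a Hlt); lia.
        -- subst; auto.
        -- specialize (Hia m Hlt); lia.
Qed.

Arguments muacc : simpl never.

Scheme PR_ind2 := Induction for PR Sort Prop
  with PRs_ind2 := Induction for PRs Sort Prop.
Combined Scheme PR_comb from PR_ind2, PRs_ind2.

Lemma cev_sound_all :
  (forall k (e : PR k), forall t v y, cev t e v = S y -> eval k e v y) /\
  (forall k m (gs : PRs k m), forall t v, allpos (cevs t gs v) = true ->
       evals k m gs v (map pred (cevs t gs v))).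
Proof.
  apply (PR_comb (fun k e => forall t v y, cev t e v = S y -> eval k e v y)
                 (fun k m gs => forall t v, allpos (cevs t gs v) = true ->
                     evals k m gs v (map pred (cevs t gs v)))); simpl.
  - intros k t v y H. injection H; intros; subst. constructor.
  - intros t v y H. injection H; intros; subst. constructor.
  - intros k i t v y H. injection H; intros; subst. constructor.
  - intros k m f IHf gs IHgs t v y H.
    destruct (allpos (cevs t gs v)) eqn:E; [|discriminate].
    econstructor; [apply (IHgs t); auto | apply (IHf t); auto].
  - intros k g IHg h IHh t v y H.
    destruct v as [|n w]; [discriminate|]. revert y H; induction n; simpl; intros y H.
    + constructor. eapply IHg; eauto.
    + destruct (nat_rec _ _ _ n) as [|z] eqn:E; [discriminate|].
      econstructor; [apply IHn; reflexivity|]. eapply IHh; eauto.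
  - intros k f IHf t v y H.
    destruct (muacc (fun j => cev t f (j :: v)) (S t)) as [|[|a]] eqn:E; simpl in H; try discriminate.
    injection H; intros; subst.
    apply muacc_spec in E. destruct E as [_ [HF Hi]].
    constructor.
    + eapply IHf; eauto.
    + intros m Hm. specialize (Hi m Hm).
      destruct (cev t f (m :: v)) as [|[|z]] eqn:Ez; try lia.
      exists z. eapply IHf; eauto.
  - intros. constructor.
  - intros k m g IHg gs IHgs t v H.
    destruct (cev t g v) as [|c] eqn:E; [discriminate|]. simpl.
    constructor; [eapply IHg; eauto | apply IHgs; auto].
Qed.

Lemma fin_unif (P : nat -> nat -> Prop) n :
  (forall i, i < n -> exists t, forall t', t <= t' -> P i t') ->
  exists t, forall t', t <= t' -> forall i, i < n -> P i t'.
Proof.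
  induction n; intros H.
  - exists 0; intros; lia.
  - destruct IHn as [t1 H1]. { intros; apply H; lia. }
    destruct (H n ltac:(lia)) as [t2 H2].
    exists (t1 + t2). intros t' Ht i Hi.
    destruct (Nat.eq_dec i n); [subst; apply H2; lia|]. apply H1; lia.
Qed.

Fixpoint cev_complete k e v y (H : eval k e v y) {struct H} :
  exists t, forall t', t <= t' -> cev t' e v = S y
with cevs_complete k m gs v ws (H : evals k m gs v ws) {struct H} :
  exists t, forall t', t <= t' -> cevs t' gs v = map S ws.
Proof.
  - destruct H.
    + exists 0; reflexivity.
    + exists 0; reflexivity.
    + exists 0; reflexivity.
    + destruct (cevs_complete _ _ _ _ _ H) as [t1 H1].
      destruct (cev_complete _ _ _ _ H0) as [t2 H2].
      exists (t1 + t2). intros t' Ht. simpl. rewrite H1 by lia.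
      assert (Hp : allpos (map S ws) = true) by (clear; induction ws; simpl; auto).
      rewrite Hp. rewrite map_map. simpl. rewrite map_id. apply H2; lia.
    + destruct (cev_complete _ _ _ _ H) as [t1 H1].
      exists t1. intros t' Ht. simpl. apply H1; auto.
    + destruct (cev_complete _ _ _ _ H) as [t1 H1].
      destruct (cev_complete _ _ _ _ H0) as [t2 H2].
      exists (t1 + t2). intros t' Ht. simpl.
      specialize (H1 t' ltac:(lia)). simpl in H1. rewrite H1. apply H2; lia.
    + destruct (cev_complete _ _ _ _ H) as [t1 H1].
      assert (Hall : forall i, i < n -> exists t, forall t', t <= t' ->
                 2 <= cev t' f (i :: v)).
      { intros i Hi. destruct (H0 i Hi) as [z Hz].
        destruct (cev_complete _ _ _ _ Hz) as [t2 H2].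
        exists t2. intros t' Ht. rewrite H2; auto; lia. }
      destruct (fin_unif _ _ Hall) as [t2 H2].
      exists (t1 + t2 + n). intros t' Ht. simpl.
      assert (E : muacc (fun j => cev t' f (j :: v)) (S t') = S (S n)).
      { apply muacc_spec. repeat split; [lia| apply H1; lia|]. intros i Hi; apply H2; auto; lia. }
      rewrite E; reflexivity.
  - destruct H.
    + exists 0; reflexivity.
    + destruct (cev_complete _ _ _ _ H) as [t1 H1].
      destruct (cevs_complete _ _ _ _ _ H0) as [t2 H2].
      exists (t1 + t2). intros t' Ht. simpl. rewrite H1, H2 by lia. reflexivity.
Qed.

Lemma Tot_hd k : Tot k (fun v => hd 0 v).
Proof. eapply Tot_ext; [|apply (Tot_proj k 0)]. intros [|] _; reflexivity. Qed.

Lemma muacc_eq F N Step : (forall j acc, Step j acc = mustep F j acc) ->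
  nat_rec (fun _ => nat) 1 Step N = muacc F N.
Proof.
  intros H. unfold muacc. induction N; simpl; auto. rewrite IHN, H. reflexivity.
Qed.

Lemma cev_tot_all :
  (forall k (e : PR k), Tot (S k) (fun l => cev (hd 0 l) e (tl l))) /\
  (forall k m (gs : PRs k m),
     Tots (S k) m (fun l => map pred (cevs (hd 0 l) gs (tl l))) /\
     Tot (S k) (fun l => if allpos (cevs (hd 0 l) gs (tl l)) then 1 else 0)).
Proof.
  apply (PR_comb (fun k e => Tot (S k) (fun l => cev (hd 0 l) e (tl l)))
     (fun k m gs => Tots (S k) m (fun l => map pred (cevs (hd 0 l) gs (tl l))) /\
     Tot (S k) (fun l => if allpos (cevs (hd 0 l) gs (tl l)) then 1 else 0))); simpl.
  - intros k. apply Tot_const.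
  - eapply Tot_ext; [|apply Tot_S, Tot_S, (Tot_proj 2 1)].
    intros [|t [|x v]] _; reflexivity.
  - intros k i. eapply Tot_ext; [|apply Tot_S, (Tot_proj (S k) (S i))].
    intros [|t v] _; simpl; auto. destruct i; reflexivity.
  - intros k m f IHf gs [IHgs1 IHgs2].
    assert (H := Tot_comp (S k) (S m) _ _ IHf (Tots_cons _ _ _ _ (Tot_hd (S k)) IHgs1)).
    eapply Tot_ext; [| apply (Tot_if0 _ _ _ _ IHgs2 (Tot_zero _) H)].
    intros l _. simpl. destruct (allpos _); reflexivity.
  - intros k g IHg h IHh.
    assert (H0 : Tot (S (S (S k))) (fun u => match nth 1 u 0 with 0 => 0 | S _ =>
        cev (nth 2 u 0) h (nth 0 u 0 :: pred (nth 1 u 0) :: skipn 3 u) end)).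
    { apply Tot_if0; [apply Tot_proj|apply Tot_zero|].
      assert (HT : Tots (S (S (S k))) (S (S (S k))) (fun u => nth 2 u 0 :: nth 0 u 0 :: pred (nth 1 u 0) :: skipn 3 u)).
      { apply Tots_cons; [apply Tot_proj|]. apply Tots_cons; [apply Tot_proj|].
        apply Tots_cons; [apply Tot_pred, Tot_proj|]. apply (Tots_skipn k 3). }
      exact (Tot_comp _ _ _ _ IHh HT). }
    assert (HR := Tot_rec _ _ _ IHg H0).
    assert (HT : Tots (S (S k)) (S (S k)) (fun l => nth 1 l 0 :: nth 0 l 0 :: skipn 2 l)).
    { apply Tots_cons; [apply Tot_proj|]. apply Tots_cons; [apply Tot_proj|]. apply (Tots_skipn k 2). }
    eapply Tot_ext; [| exact (Tot_comp _ _ _ _ HR HT)].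
    intros l Hl. destruct l as [|t [|n w]]; try discriminate. simpl.
    clear Hl; induction n; simpl; auto. rewrite IHn. match goal with |- match ?a with _ => _ end = _ => destruct a; reflexivity end.
  - intros k f IHf.
    assert (HF : Tot (S (S (S k))) (fun u => cev (nth 2 u 0) f (nth 0 u 0 :: skipn 3 u))).
    { assert (HT : Tots (S (S (S k))) (S (S k)) (fun u => nth 2 u 0 :: nth 0 u 0 :: skipn 3 u)).
      { apply Tots_cons; [apply Tot_proj|]. apply Tots_cons; [apply Tot_proj|]. apply (Tots_skipn k 3). }
      exact (Tot_comp _ _ _ _ IHf HT). }
    set (r := fun u => cev (nth 2 u 0) f (nth 0 u 0 :: skipn 3 u)) in HF.
    assert (Hstep : Tot (S (S (S k))) (fun u =>
      match nth 1 u 0 with 0 => 0 | S _ =>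
        match pred (nth 1 u 0) with
        | 0 => match r u with 0 => 0 | S _ => match pred (r u) with 0 => S (S (nth 0 u 0)) | S _ => 1 end end
        | S _ => nth 1 u 0 end end)).
    { apply Tot_if0; [apply Tot_proj|apply Tot_zero|].
      apply Tot_if0; [apply Tot_pred, Tot_proj| |apply Tot_proj].
      apply Tot_if0; [exact HF|apply Tot_zero|].
      apply Tot_if0; [apply Tot_pred, HF| apply Tot_S, Tot_S, Tot_proj | apply Tot_const]. }
    assert (HA := Tot_rec _ _ _ (Tot_const (S k) 1) Hstep).
    assert (HT : Tots (S k) (S (S k)) (fun l => S (nth 0 l 0) :: nth 0 l 0 :: skipn 1 l)).
    { apply Tots_cons; [apply Tot_S, Tot_proj|]. apply Tots_cons; [apply Tot_proj|]. apply (Tots_skipn k 1). }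
    eapply Tot_ext; [| exact (Tot_pred _ _ (Tot_comp _ _ _ _ HA HT))].
    intros l Hl. destruct l as [|t v]; try discriminate. cbv beta.
    change (cev (hd 0 (t::v)) (PRmu k f) (tl (t::v))) with (pred (muacc (fun j => cev t f (j :: v)) (S t))).
    f_equal. apply muacc_eq. intros j acc. unfold mustep, r. simpl.
    destruct acc as [|[|a]]; simpl; auto. destruct (cev t f (j :: v)) as [|[|b]]; reflexivity.
  - intros k. split; [apply Tots_nil | apply Tot_const].
  - intros k m g IHg gs [IHgs1 IHgs2]. split.
    + apply Tots_cons; auto. apply Tot_pred; auto.
    + eapply Tot_ext; [| exact (Tot_if0 _ _ _ _ IHg (Tot_zero _) IHgs2)].
      intros l _. simpl. destruct (cev _ g _); reflexivity.
Qed.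

Definition ab (e : PR 1) s x : bool := negb (Nat.eqb (cev s e [x]) 0).
Definition cnt e s n := count_below (ab e s) n.
Definition Cf e (a b c : nat -> nat) k m N n : nat :=
  (k - N) + (n - N) + (S k * S m - n) +
  (a N * n * S k - (cnt e N n * S (c N) * S k + b N * n * S k + n * S (c N))).
Fixpoint prodf (f : nat -> nat) j := match j with 0 => 1 | S j => prodf f j * f j end.
Definition Df e a b c k m N := prodf (Cf e a b c k m N) (S N).

Lemma Tot_clock (e : PR 1) : Tot 2 (fun l => cev (nth 0 l 0) e [nth 1 l 0]).
Proof.
  eapply Tot_ext; [| apply (proj1 cev_tot_all 1 e)].
  intros [|s [|x [|]]] H; try discriminate; reflexivity.
Qed.

Lemma Tot_lift1 (f : nat -> nat) K g : Tot 1 (fun l => f (hd 0 l)) -> Tot K g -> Tot K (fun v => f (g v)).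
Proof. intros Hf Hg. exact (Tot_comp1 K _ g Hf Hg). Qed.

Lemma Tot_ab K e gs gx : Tot K gs -> Tot K gx ->
  Tot K (fun v => if ab e (gs v) (gx v) then 1 else 0).
Proof.
  intros Hs Hx.
  eapply Tot_ext; [| apply (Tot_if0 K (fun v => cev (gs v) e [gx v]) (fun _ => 0) (fun _ => 1))].
  - intros v _. unfold ab. destruct (cev _ e _); reflexivity.
  - exact (Tot_comp2 K _ gs gx (Tot_clock e) Hs Hx).
  - apply Tot_const.
  - apply Tot_const.
Qed.

Lemma Tot_cnt_base e : Tot 2 (fun l => cnt e (nth 1 l 0) (nth 0 l 0)).
Proof.
  eapply Tot_ext; [| apply (Tot_rec 1 (fun _ => 0)
      (fun u => nth 1 u 0 + (if ab e (nth 2 u 0) (nth 0 u 0) then 1 else 0)))].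
  - intros [|n [|s [|]]] H; try discriminate. simpl. unfold cnt.
    clear H; induction n; simpl; auto.
  - apply Tot_const.
  - apply Tot_plus; [apply Tot_proj|]. apply Tot_ab; apply Tot_proj.
Qed.

Lemma Tot_cnt K e gs gn : Tot K gs -> Tot K gn -> Tot K (fun v => cnt e (gs v) (gn v)).
Proof. intros Hs Hn. exact (Tot_comp2 K _ gn gs (Tot_cnt_base e) Hn Hs). Qed.

Section Alg.
End Alg.

Lemma Tot_Cf e a b c K gk gm gN gn :
  Tot 1 (fun l => a (hd 0 l)) -> Tot 1 (fun l => b (hd 0 l)) -> Tot 1 (fun l => c (hd 0 l)) ->
  Tot K gk -> Tot K gm -> Tot K gN -> Tot K gn ->
  Tot K (fun v => Cf e a b c (gk v) (gm v) (gN v) (gn v)).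
Proof.
  intros Ha Hb Hc Hk Hm HN Hn. unfold Cf.
  assert (HA := Tot_lift1 a K gN Ha HN).
  assert (HB := Tot_lift1 b K gN Hb HN).
  assert (HC := Tot_lift1 c K gN Hc HN).
  assert (HCN := Tot_cnt K e gN gn HN Hn).
  repeat first [apply Tot_plus | apply Tot_minus | apply Tot_mult | apply Tot_S | assumption].
Qed.

Lemma Tot_prodf K F : Tot (S K) F -> Tot (S K) (fun l => prodf (fun n => F (n :: tl l)) (hd 0 l)).
Proof.
  intros HF.
  assert (H2 : Tot (S (S K)) (fun u => nth 1 u 0 * F (nth 0 u 0 :: skipn 2 u))).
  { apply Tot_mult; [apply Tot_proj|].
    assert (HT : Tots (S (S K)) (S K) (fun u => nth 0 u 0 :: skipn 2 u)).
    { apply Tots_cons; [apply Tot_proj|]. exact (Tots_skipn K 2). }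
    exact (Tot_comp _ _ _ _ HF HT). }
  assert (H := Tot_rec K (fun _ => 1) _ (Tot_const _ 1) H2).
  eapply Tot_ext; [|exact H].
  intros [|n w] Hl; try discriminate. simpl. clear Hl. induction n; simpl; auto; rewrite IHn; lia.
Qed.

Lemma prodf_zero f j n : n < j -> f n = 0 -> prodf f j = 0.
Proof.
  induction j; simpl; intros Hn Hf; [lia|].
  destruct (Nat.eq_dec n j); [subst; rewrite Hf; lia|]. rewrite IHj; auto; lia.
Qed.

Lemma prodf_zero_inv f j : prodf f j = 0 -> exists n, n < j /\ f n = 0.
Proof.
  induction j; simpl; intros H; [discriminate|].
  apply Nat.eq_mul_0 in H. destruct H as [H|H].
  - destruct (IHj H) as [n [Hn Hf]]; exists n; split; auto; lia.
  - exists j; split; auto.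
Qed.

Lemma Tot_len2 (g : list nat -> nat) : Tot 2 g -> Tot 2 (fun l => g [nth 0 l 0; nth 1 l 0]).
Proof. apply Tot_ext. intros [|x [|y [|]]] H; try discriminate; reflexivity. Qed.

Lemma construct_NF e a b c :
  Tot 1 (fun l => a (hd 0 l)) -> Tot 1 (fun l => b (hd 0 l)) -> Tot 1 (fun l => c (hd 0 l)) ->
  (forall k m, exists N n, n <= N /\ Cf e a b c k m N n = 0) ->
  exists NF nF : nat -> nat -> nat,
    (forall k m, Cf e a b c k m (NF k m) (nF k m) = 0) /\
    Tot 2 (fun l => NF (nth 0 l 0) (nth 1 l 0)) /\ Tot 2 (fun l => nF (nth 0 l 0) (nth 1 l 0)).
Proof.
  intros Ha Hb Hc Hex.
  assert (HF : Tot 4 (fun l => Cf e a b c (nth 1 l 0) (nth 2 l 0) (nth 3 l 0) (nth 0 l 0))).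
  { apply Tot_Cf; auto; apply Tot_proj. }
  assert (HP := Tot_prodf 3 _ HF).
  assert (HT : Tots 3 4 (fun l => S (nth 0 l 0) :: nth 1 l 0 :: nth 2 l 0 :: nth 0 l 0 :: [])).
  { repeat apply Tots_cons; try apply Tot_proj; try apply Tots_nil. apply Tot_S, Tot_proj. }
  assert (HD0 := Tot_comp _ _ _ _ HP HT).
  assert (HD : Tot 3 (fun v => prodf (Cf e a b c (nth 1 v 0) (nth 2 v 0) (nth 0 v 0)) (S (nth 0 v 0))))
    by (eapply Tot_ext; [|exact HD0]; intros; reflexivity).
  destruct (Tot_mu 2 _ HD) as [g [Hg Hgspec]].
  { intros [|k [|m [|]]] Hl; try discriminate. destruct (Hex k m) as [N [n [H1 H2]]].
    exists N. apply (prodf_zero _ _ n); simpl; auto. lia. }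
  set (NF := fun k m => g [k; m]).
  assert (HNF : Tot 2 (fun l => NF (nth 0 l 0) (nth 1 l 0))) by (apply Tot_len2; auto).
  assert (HF2 : Tot 3 (fun l => Cf e a b c (nth 1 l 0) (nth 2 l 0) (NF (nth 1 l 0) (nth 2 l 0)) (nth 0 l 0))).
  { apply Tot_Cf; auto; try apply Tot_proj.
    assert (HT2 : Tots 3 2 (fun l => nth 1 l 0 :: nth 2 l 0 :: [])).
    { repeat apply Tots_cons; try apply Tot_proj; apply Tots_nil. }
    exact (Tot_comp _ _ _ _ HNF HT2). }
  destruct (Tot_mu 2 _ HF2) as [h [Hh Hhspec]].
  { intros [|k [|m [|]]] Hl; try discriminate.
    specialize (Hgspec [k; m] Hl).
    destruct (prodf_zero_inv _ _ Hgspec) as [n [_ Hn]].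
    exists n. exact Hn. }
  exists NF, (fun k m => h [k; m]). split; [|split]; auto.
  - intros k m. exact (Hhspec [k; m] eq_refl).
  - apply Tot_len2; auto.
Qed.

Fixpoint mseq (nF : nat -> nat -> nat) k := match k with 0 => 0 | S k => nF k (mseq nF k) end.
Definition Kc nF x := count_below (fun j => Nat.leb (mseq nF (S j)) x) x.
Definition Bf e NF nF x := ab e (NF (Kc nF x) (mseq nF (Kc nF x))) x.

Lemma Bf_computable e NF nF :
  Tot 2 (fun l => NF (nth 0 l 0) (nth 1 l 0)) -> Tot 2 (fun l => nF (nth 0 l 0) (nth 1 l 0)) ->
  computable_set (Bf e NF nF).
Proof.
  intros HNF HnF.
  assert (HM : Tot 1 (fun l => mseq nF (hd 0 l))).
  { eapply Tot_ext; [| apply (Tot_rec 0 (fun _ => 0) (fun u => nF (nth 0 u 0) (nth 1 u 0)))].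
    - intros [|n [|]] Hl; try discriminate. simpl. clear Hl. induction n; simpl; auto; rewrite IHn; auto.
    - apply Tot_const.
    - assert (HT : Tots 2 2 (fun u => nth 0 u 0 :: nth 1 u 0 :: [])).
      { repeat apply Tots_cons; try apply Tot_proj; apply Tots_nil. }
      eapply Tot_ext; [| exact (Tot_comp _ _ _ _ HnF HT)].
      intros; reflexivity. }
  assert (HK0 : Tot 2 (fun l => count_below (fun j => Nat.leb (mseq nF (S j)) (nth 1 l 0)) (nth 0 l 0))).
  { eapply Tot_ext; [| apply (Tot_rec 1 (fun _ => 0)
       (fun u => nth 1 u 0 + match mseq nF (S (nth 0 u 0)) - nth 2 u 0 with 0 => 1 | S _ => 0 end))].
    - intros [|n [|x [|]]] Hl; try discriminate. simpl. clear Hl.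
      induction n; simpl; auto. rewrite IHn. f_equal.
      destruct (Nat.leb_spec (nF n (mseq nF n)) x); destruct (nF n (mseq nF n) - x) eqn:E; auto; lia.
    - apply Tot_const.
    - apply Tot_plus; [apply Tot_proj|]. apply Tot_if0; try apply Tot_const.
      apply Tot_minus; [|apply Tot_proj]. apply (Tot_lift1 (mseq nF) 3 _ HM). apply Tot_S, Tot_proj. }
  assert (HK : Tot 1 (fun l => Kc nF (hd 0 l))).
  { assert (HT : Tots 1 2 (fun u => hd 0 u :: hd 0 u :: [])).
    { repeat apply Tots_cons; try apply Tot_hd; apply Tots_nil. }
    eapply Tot_ext; [| exact (Tot_comp _ _ _ _ HK0 HT)]. intros; reflexivity. }
  assert (HB : Tot 1 (fun l => if Bf e NF nF (hd 0 l) then 1 else 0)).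
  { unfold Bf. apply Tot_ab; [|apply Tot_hd].
    assert (HT : Tots 1 2 (fun u => Kc nF (hd 0 u) :: mseq nF (Kc nF (hd 0 u)) :: [])).
    { repeat apply Tots_cons; try apply Tots_nil; auto. apply (Tot_lift1 (mseq nF) 1 _ HM HK). }
    eapply Tot_ext; [| exact (Tot_comp _ _ _ _ HNF HT)]. intros; reflexivity. }
  destruct HB as [eb Heb]. exists eb. intros n. apply (Heb [n]). reflexivity.
Qed.

Lemma count_le S n : (count_below S n <= n)%nat.
Proof. induction n; simpl; auto. destruct (S n); lia. Qed.

Lemma count_mono (S1 S2 : nat -> bool) n : (forall x, S1 x = true -> S2 x = true) ->
  (count_below S1 n <= count_below S2 n)%nat.
Proof.
  intros H. induction n; simpl; auto.
  destruct (S1 n) eqn:E; [rewrite (H n E)|destruct (S2 n)]; lia.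
Qed.

Lemma count_ext (S1 S2 : nat -> bool) n : (forall x, x < n -> S1 x = S2 x) ->
  count_below S1 n = count_below S2 n.
Proof.
  induction n; simpl; intros H; auto. rewrite IHn by (intros; apply H; lia).
  rewrite H by lia. reflexivity.
Qed.

Lemma count_range (S1 S2 : nat -> bool) m d :
  (forall x, m <= x < m + d -> S1 x = S2 x) ->
  count_below S1 (m + d) + count_below S2 m = count_below S2 (m + d) + count_below S1 m.
Proof.
  induction d; intros H.
  - rewrite Nat.add_0_r. lia.
  - rewrite Nat.add_succ_r. simpl. rewrite (H (m + d)) by lia.
    specialize (IHd ltac:(intros; apply H; lia)). lia.
Qed.

Lemma count_lt k n : count_below (fun j => Nat.ltb j k) n = Nat.min k n.
Proof.
  induction n; simpl. lia. rewrite IHn. destruct (Nat.ltb_spec n k); lia.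
Qed.

Lemma count_symdiff (A B : nat -> bool) n : subset B A ->
  count_below (symdiff A B) n + count_below B n = count_below A n.
Proof.
  intros H. induction n; simpl; auto. change (symdiff A B n) with (xorb (A n) (B n)).
  destruct (B n) eqn:EB; [rewrite (H n EB)|]; destruct (A n); simpl; lia.
Qed.

Section Seq.
End Seq.

Lemma Cf_zero e a b c k m N n : Cf e a b c k m N n = 0 ->
  k <= N /\ n <= N /\ S k * S m <= n /\
  a N * n * S k <= cnt e N n * S (c N) * S k + b N * n * S k + n * S (c N).
Proof. unfold Cf. lia. Qed.

Lemma mseq_step e a b c NF nF :
  (forall k m, Cf e a b c k m (NF k m) (nF k m) = 0) ->
  forall k, S k * S (mseq nF k) <= mseq nF (S k).
Proof. intros H k. simpl. apply (Cf_zero _ _ _ _ _ _ _ _ (H k (mseq nF k))). Qed.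

Lemma mseq_props e a b c NF nF :
  (forall k m, Cf e a b c k m (NF k m) (nF k m) = 0) ->
  (forall k, k <= mseq nF k) /\ (forall j k, j < k -> mseq nF j < mseq nF k).
Proof.
  intros H. assert (Hs := mseq_step _ _ _ _ _ _ H).
  assert (Hlt : forall k, mseq nF k < mseq nF (S k)) by (intros k; specialize (Hs k); nia).
  split.
  - induction k; [lia|]. specialize (Hlt k). lia.
  - intros j k Hjk. induction Hjk; auto. specialize (Hlt m). lia.
Qed.

Lemma Kc_interval e a b c NF nF :
  (forall k m, Cf e a b c k m (NF k m) (nF k m) = 0) ->
  forall k x, mseq nF k <= x < mseq nF (S k) -> Kc nF x = k.
Proof.
  intros H k x Hx. destruct (mseq_props _ _ _ _ _ _ H) as [H1 H2].
  unfold Kc. rewrite (count_ext _ (fun j => Nat.ltb j k)).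
  - rewrite count_lt. specialize (H1 k). lia.
  - intros j Hj. destruct (Nat.ltb_spec j k).
    + apply Nat.leb_le. assert (mseq nF (S j) <= mseq nF k).
      { destruct (Nat.eq_dec (S j) k); [subst; lia|]. specialize (H2 (S j) k ltac:(lia)); lia. }
      lia.
    + apply Nat.leb_gt. assert (mseq nF (S k) <= mseq nF (S j)).
      { destruct (Nat.eq_dec k j); [subst; lia|]. specialize (H2 (S k) (S j) ltac:(lia)); lia. }
      lia.
Qed.

Lemma interval_exists e a b c NF nF :
  (forall k m, Cf e a b c k m (NF k m) (nF k m) = 0) ->
  forall x, exists k, mseq nF k <= x < mseq nF (S k).
Proof.
  intros H. destruct (mseq_props _ _ _ _ _ _ H) as [H1 H2].
  induction x.
  - exists 0. specialize (H2 0 1 ltac:(lia)). simpl in *. lia.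
  - destruct IHx as [k Hk]. destruct (Nat.lt_ge_cases (S x) (mseq nF (S k))).
    + exists k; lia.
    + exists (S k). specialize (H2 (S k) (S (S k)) ltac:(lia)). lia.
Qed.

Lemma Bf_interval e a b c NF nF :
  (forall k m, Cf e a b c k m (NF k m) (nF k m) = 0) ->
  forall k x, mseq nF k <= x < mseq nF (S k) -> Bf e NF nF x = ab e (NF k (mseq nF k)) x.
Proof.
  intros H k x Hx. unfold Bf. rewrite (Kc_interval _ _ _ _ _ _ H k x Hx). reflexivity.
Qed.

Lemma Bf_count e a b c NF nF :
  (forall k m, Cf e a b c k m (NF k m) (nF k m) = 0) ->
  forall k, cnt e (NF k (mseq nF k)) (mseq nF (S k)) <= count_below (Bf e NF nF) (mseq nF (S k)) + mseq nF k.
Proof.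
  intros H k. destruct (mseq_props _ _ _ _ _ _ H) as [H1 H2].
  specialize (H2 k (S k) ltac:(lia)).
  set (m := mseq nF k) in *. set (n := mseq nF (S k)) in *.
  replace n with (m + (n - m)) by lia.
  assert (HR := count_range (Bf e NF nF) (ab e (NF k m)) m (n - m)
     ltac:(intros x Hx; apply (Bf_interval _ _ _ _ _ _ H); unfold m, n in *; lia)).
  unfold cnt. assert (Hc := count_le (ab e (NF k m)) m). lia.
Qed.

Lemma ab_sound (A : nat -> bool) e :
  (forall n, A n = true <-> exists y, eval 1 e [n] y) ->
  forall s x, ab e s x = true -> A x = true.
Proof.
  intros Hce s x H. unfold ab in H. destruct (cev s e [x]) as [|y] eqn:E; [discriminate|].
  apply Hce. exists y. apply (proj1 cev_sound_all _ e s). auto.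
Qed.

Lemma cnt_stab (A : nat -> bool) e :
  (forall n, A n = true <-> exists y, eval 1 e [n] y) ->
  forall n, exists T, forall s, T <= s -> cnt e s n = count_below A n.
Proof.
  intros Hce n. induction n.
  - exists 0; reflexivity.
  - destruct IHn as [T1 H1].
    destruct (A n) eqn:EA.
    + destruct (proj1 (Hce n) EA) as [y Hy].
      destruct (cev_complete _ _ _ _ Hy) as [T2 H2].
      exists (T1 + T2). intros s Hs. unfold cnt in *. simpl. rewrite H1 by lia.
      unfold ab. rewrite H2 by lia. rewrite EA. reflexivity.
    + exists T1. intros s Hs. unfold cnt in *. simpl. rewrite H1 by lia. rewrite EA.
      destruct (ab e s n) eqn:E; auto.
      rewrite (ab_sound A e Hce s n E) in EA. discriminate.
Qed.
Local Open Scope R_scope.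

Lemma div_nonneg x y : 0 <= x -> 0 < y -> 0 <= x / y.
Proof. intros; unfold Rdiv; apply Rmult_le_pos; [lra|]. apply Rlt_le, Rinv_0_lt_compat; lra. Qed.

Lemma key_iff (cn n a b c k : nat) : (0 < n)%nat ->
  ((a * n * S k <= cn * S c * S k + b * n * S k + n * S c)%nat <->
   (INR a - INR b) / INR (S c) - / INR (S k) <= INR cn / INR n).
Proof.
  intros Hn0.
  assert (Hn : 0 < INR n) by (apply lt_0_INR; lia).
  assert (Hc : 0 < INR (S c)) by (apply lt_0_INR; lia).
  assert (Hk : 0 < INR (S k)) by (apply lt_0_INR; lia).
  set (num := INR cn * INR (S c) * INR (S k) + INR b * INR n * INR (S k) + INR n * INR (S c)
              - INR a * INR n * INR (S k)).
  set (D := INR n * INR (S c) * INR (S k)).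
  assert (HD : 0 < D) by (unfold D; apply Rmult_lt_0_compat; [apply Rmult_lt_0_compat|]; lra).
  assert (Eq : INR cn / INR n - ((INR a - INR b) / INR (S c) - / INR (S k)) = num / D).
  { unfold num, D. field. repeat split; lra. }
  assert (Hiff : (a * n * S k <= cn * S c * S k + b * n * S k + n * S c)%nat <-> 0 <= num).
  { unfold num. split; intros H.
    - apply le_INR in H. rewrite !plus_INR, !mult_INR in H. lra.
    - apply INR_le. rewrite !plus_INR, !mult_INR. lra. }
  rewrite Hiff. split; intros H.
  - assert (0 <= num / D) by (apply div_nonneg; auto). lra.
  - assert (Hq : 0 <= num / D) by lra.
    replace num with (num / D * D) by (field; lra).
    apply Rmult_le_pos; lra.
Qed.

Lemma div_le_inv x y z : 0 < y -> 0 < z -> x * z <= y -> x / y <= / z.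
Proof.
  intros Hy Hz H.
  assert (E : x / y - / z = (x * z - y) * / (y * z)) by (field; lra).
  assert (0 < / (y * z)) by (apply Rinv_0_lt_compat; nra).
  assert ((x * z - y) * / (y * z) <= 0) by nra. lra.
Qed.

Lemma rho_nonneg S n : 0 <= rho S n.
Proof.
  unfold rho. destruct n. unfold Rdiv. simpl. rewrite Rinv_0, Rmult_0_r. lra.
  apply div_nonneg; [apply pos_INR| apply lt_0_INR; lia].
Qed.

Lemma rho_mono (S1 S2 : nat -> bool) n : subset S1 S2 -> rho S1 n <= rho S2 n.
Proof.
  intros H. unfold rho. destruct n. unfold Rdiv. simpl. rewrite Rinv_0, !Rmult_0_r. lra.
  unfold Rdiv. apply Rmult_le_compat_r.
  - apply Rlt_le, Rinv_0_lt_compat, lt_0_INR; lia.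
  - apply le_INR, count_mono; auto.
Qed.

Lemma rho_symdiff (A B : nat -> bool) n : subset B A ->
  rho (symdiff A B) n = rho A n - rho B n.
Proof.
  intros H. unfold rho. rewrite <- (count_symdiff A B n H), plus_INR. unfold Rdiv. ring.
Qed.

Lemma cf_tot (a : nat -> nat) : computable_fun a -> Tot 1 (fun l => a (hd 0%nat l)).
Proof.
  intros [e He]. exists e. intros [|n [|]] Hl; try discriminate. apply He.
Qed.

Theorem mainTheorem9 (A : nat -> bool) :
  ce_set A ->
  (exists r : R, upper_density A = Finite r /\ Delta02 r) ->
  exists B : nat -> bool,
    computable_set B /\ subset B A /\
    upper_density B = upper_density A /\ dens_dist A B = Finite 0.
Proof.
  intros [e Hce] [r [Hr [q [[a [b [c [Ha [Hb [Hc Hq]]]]]] Hlim]]]].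
  set (uA := fun j => rho A (S j)).
  assert (HA : is_LimSup_seq uA r).
  { destruct (ex_LimSup_seq uA) as [l Hl].
    assert (E : LimSup_seq uA = l) by (apply is_LimSup_seq_unique; auto).
    unfold upper_density in Hr. fold uA in Hr. rewrite Hr in E. subst l. exact Hl. }
  apply is_lim_seq_spec in Hlim.
  assert (Hex : forall k m, exists N n, (n <= N)%nat /\ Cf e a b c k m N n = 0%nat).
  { intros k m.
    assert (Heps : 0 < / (2 * INR (S k))).
    { apply Rinv_0_lt_compat. assert (0 < INR (S k)) by (apply lt_0_INR; lia). lra. }
    set (eps := mkposreal _ Heps).
    destruct (proj1 (HA eps) (S k * S m)%nat) as [j [Hj Hrho]].
    destruct (cnt_stab A e Hce (S j)) as [T1 HT1].
    destruct (Hlim eps) as [T2 HT2].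
    set (N := (T1 + T2 + k + S j)%nat).
    exists N, (S j). split; [unfold N; lia|].
    assert (Hkey : (a N * S j * S k <= cnt e N (S j) * S (c N) * S k + b N * S j * S k + S j * S (c N))%nat).
    { apply key_iff; [lia|].
      rewrite HT1 by (unfold N; lia).
      specialize (HT2 N ltac:(unfold N; lia)). rewrite Hq in HT2.
      apply Rabs_def2 in HT2. unfold uA, rho in Hrho. cbn [pos] in *.
      assert (E2 : / INR (S k) = 2 * / (2 * INR (S k))).
      { field. assert (0 < INR (S k)) by (apply lt_0_INR; lia). lra. }
      rewrite E2. unfold eps in *; cbn [pos] in *. lra. }
    unfold Cf. lia. }
  destruct (construct_NF e a b c (cf_tot a Ha) (cf_tot b Hb) (cf_tot c Hc) Hex)
    as [NF [nF [HCf [HNF HnF]]]].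
  set (B := Bf e NF nF).
  assert (Hsub : subset B A).
  { intros x Hx. unfold B, Bf in Hx. eapply ab_sound; eauto. }
  destruct (mseq_props _ _ _ _ _ _ HCf) as [Hm1 Hm2].
  assert (LB : forall eps, 0 < eps -> forall N0, exists k, (N0 <= k)%nat /\
             r - eps < rho B (mseq nF (S k))).
  { intros eps Heps N0.
    assert (He2 : 0 < eps / 2) by lra.
    destruct (Hlim (mkposreal _ He2)) as [T HT].
    destruct (INR_archimed (eps / 4) 1 ltac:(lra)) as [K1 HK1].
    set (k := (N0 + T + K1)%nat). exists k. split; [unfold k; lia|].
    set (m := mseq nF k). set (n := mseq nF (S k)). set (N := NF k m).
    destruct (Cf_zero _ _ _ _ _ _ _ _ (HCf k m)) as [HkN [HnN [Hmn Hineq]]].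
    fold N in HkN, HnN, Hmn, Hineq.
    change (nF k m) with n in HnN, Hmn, Hineq.
    assert (Hn0 : (0 < n)%nat) by nia.
    apply key_iff in Hineq; [|lia].
    assert (Hcnt := Bf_count _ _ _ _ _ _ HCf k). fold m n N in Hcnt. fold B in Hcnt.
    apply le_INR in Hcnt. rewrite plus_INR in Hcnt.
    assert (Hnpos : 0 < INR n) by (apply lt_0_INR; lia).
    assert (Hkpos : 0 < INR (S k)) by (apply lt_0_INR; lia).
    assert (Hmn' : INR m / INR n <= / INR (S k)).
    { apply div_le_inv; auto. rewrite <- mult_INR. apply le_INR. nia. }
    assert (Hsmall : / INR (S k) < eps / 4).
    { assert (INR K1 <= INR (S k)) by (apply le_INR; unfold k; lia).
      apply (Rmult_lt_reg_l (INR (S k))); auto. rewrite Rinv_r by lra. nra. }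
    specialize (HT N ltac:(unfold k in HkN; lia)). rewrite Hq in HT.
    apply Rabs_def2 in HT. cbn [pos] in HT.
    assert (E : INR (count_below B n) / INR n >= INR (cnt e N n) / INR n - INR m / INR n).
    { assert (E0 : INR (count_below B n) / INR n - (INR (cnt e N n) / INR n - INR m / INR n)
                = (INR (count_below B n) + INR m - INR (cnt e N n)) / INR n) by (field; lra).
      assert (0 <= (INR (count_below B n) + INR m - INR (cnt e N n)) / INR n)
        by (apply div_nonneg; lra).
      lra. }
    unfold rho. lra. }
  assert (HB : is_LimSup_seq (fun j => rho B (S j)) r).
  { intros eps. split.
    - intros N0. destruct (LB eps (cond_pos eps) N0) as [k [Hk Hr']].
      exists (pred (mseq nF (S k))). specialize (Hm1 (S k)). split; [lia|].
      replace (S (pred (mseq nF (S k)))) with (mseq nF (S k)) by lia. exact Hr'.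
    - destruct (proj2 (HA eps)) as [N0 HN0]. exists N0. intros n Hn.
      specialize (HN0 n Hn). unfold uA in HN0. assert (H := rho_mono B A (S n) Hsub). lra. }
  assert (HL : is_LimInf_seq (fun j => rho (symdiff A B) (S j)) 0).
  { intros eps. split.
    - intros N0.
      assert (He2 : 0 < eps / 2) by (assert (H0e := cond_pos eps); lra).
      destruct (proj2 (HA (mkposreal _ He2))) as [T3 HT3].
      destruct (LB (eps / 2) He2 (N0 + T3)%nat) as [k [Hk Hr']].
      exists (pred (mseq nF (S k))). specialize (Hm1 (S k)). split; [lia|].
      replace (S (pred (mseq nF (S k)))) with (mseq nF (S k)) by lia.
      specialize (HT3 (pred (mseq nF (S k))) ltac:(lia)). unfold uA in HT3.
      replace (S (pred (mseq nF (S k)))) with (mseq nF (S k)) in HT3 by lia.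
      cbn [pos] in HT3. rewrite rho_symdiff by auto. lra.
    - exists 0%nat. intros n _. assert (H := rho_nonneg (symdiff A B) (S n)).
      assert (H0e := cond_pos eps); lra. }
  exists B. split; [|split; [exact Hsub|split]].
  - apply (Bf_computable e NF nF HNF HnF).
  - unfold upper_density in *. rewrite Hr. apply is_LimSup_seq_unique. exact HB.
  - unfold dens_dist, lower_density. apply is_LimInf_seq_unique. exact HL.
Qed.
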